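(* Let $\theta_n>0$ and let $L_{n-1},L_n\ge 1$ be integers. Let $z^l$ be a real tensor and let $z^l_1,\dots,z^l_{L_{n-1}}$ be tensors of the same shape with $\sum_{i=1}^{L_{n-1}} z^l_i=z^l$. Let $X$ be the tensor obtained by stacking them, $X[i]=z^l_i$ for $i\in\{1,\dots,L_{n-1}\}$, and let $\widetilde h(X)$ be the output of the PASC integrate-and-fire procedure (described in the context) with threshold parameter $\theta_n$, input quantization step $L_{n-1}$ and output quantization step $L_n$. Then (a) $\displaystyle \widehat h(z^l):=\theta_n\,\mathrm{clip}\!\left(\frac{1}{L_n}\left\lfloor \frac{z^l L_n}{\theta_n}+\frac12\right\rfloor,0,1\right)=\sum_{j=1}^{L_n}\widetilde h(X)[j]$ (elementwise), and (b) every entry of every $\widetilde h(X)[j]$, $j\in\{1,\dots,L_n\}$, lies in the set $\{0,\theta_n/L_n\}$.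
   Context: $\widehat h$ is the Quantization-Clip-Floor-Shift (QCFS) activation with quantization step $L_n$ and (trained) threshold $\lambda^l=\theta_n$; $\mathrm{clip}(y,0,1)=\min(\max(y,0),1)$ and all operations are elementwise. $H$ denotes the Heaviside step function, $H(y)=1$ if $y\ge 0$ and $H(y)=0$ otherwise. The PASC integrate-and-fire procedure $\widetilde h$ acts independently on each entry; for a single entry, with input values $X[1],\dots,X[L_{n-1}]$, it is as follows. Set $\theta^*=\theta_n/L_n$, membrane potential $m=\theta^*/2$, spike count $s=0$. Stage 1: for $t=1,\dots,L_{n-1}$: set $m\leftarrow m+X[t]$; if $m\ge\theta^*$ then $s\leftarrow s+\theta^*$ and $m\leftarrow m-\theta^*$. Stage 2 (no input; starting from the $m$ and $s$ left by Stage 1): for $t=1,\dots,\max(L_{n-1},L_n)-1$: if $m\ge\theta^*$ then $s\leftarrow s+\theta^*$, $m\leftarrow m-\theta^*$ (excitatory spike); else if $m<0$ then $s\leftarrow s-\theta^*$, $m\leftarrow m+\theta^*$ (inhibitory spike); otherwise nothing. Stage 3: set $\mathrm{mem}(0)=s$; for $t=1,\dots,L_n$: output $\widetilde h(X)[t]=H(\mathrm{mem}(t-1)-\theta^* )\cdot\theta^*$ and set $\mathrm{mem}(t)=\mathrm{mem}(t-1)-\widetilde h(X)[t]$. The output $\widetilde h(X)$ is the stack of the $L_n$ values $\widetilde h(X)[1],\dots,\widetilde h(X)[L_n]$. *)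

(* Defs.v *)
From HB Require Import structures.
From mathcomp Require Import all_boot all_order all_algebra.
From mathcomp Require Import reals.
Import Order.TTheory GRing.Theory Num.Theory.
Local Open Scope ring_scope.

Section Defs.
Variable R : realType.

Definition clip01 (y : R) : R := Num.min (Num.max y 0) 1.

Definition qcfs (theta : R) (L : nat) (y : R) : R :=
  theta * clip01 ((Num.floor (y * L%:R / theta + 2^-1))%:~R / L%:R).

(* state = (membrane potential m, spike count s) *)
Definition pasc_stage1 (thr : R) (ms : R * R) (x : R) : R * R :=
  let m := ms.1 + x in
  if thr <= m then (m - thr, ms.2 + thr) else (m, ms.2).

Definition pasc_stage2 (thr : R) (ms : R * R) : R * R :=
  if thr <= ms.1 then (ms.1 - thr, ms.2 + thr)
  else if ms.1 < 0 then (ms.1 + thr, ms.2 - thr)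
  else ms.

Definition pasc_mem (thr s : R) (t : nat) : R :=
  iter t (fun m => m - (if thr <= m then thr else 0)) s.

(* PASC on a single entry, input values x[1..Lp] (here x : 'I_Lp -> R,
   x (t-1) = X[t]); returns the output at time step j+1 (0-based j),
   i.e. H(mem(j) - thr) * thr with H(y) = 1 iff y >= 0. *)
Definition pasc_entry (theta : R) (Lp Ln : nat) (x : 'I_Lp -> R) (j : nat) : R :=
  let thr := theta / Ln%:R in
  let st1 := foldl (pasc_stage1 thr) (thr / 2, 0) [seq x t | t <- enum 'I_Lp] in
  let st2 := iter (maxn Lp Ln).-1 (pasc_stage2 thr) st1 in
  if thr <= pasc_mem thr st2.2 j then thr else 0.

(* PASC on tensors (functions I -> R), applied entrywise.
   X t = X[t+1] ; output (pasc theta Ln X j) = htilde(X)[j+1]. *)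
Definition pasc (I : Type) (theta : R) (Lp Ln : nat) (X : 'I_Lp -> I -> R)
  (j : 'I_Ln) : I -> R :=
  fun i => pasc_entry theta Lp Ln (fun t => X t i) j.
End Defs.
Arguments pasc_entry {R} theta Lp Ln x j.
Arguments pasc {R I} theta Lp Ln X j.
Arguments qcfs {R} theta L y.

(* Main.v *)
Require Import Defs.
From HB Require Import structures.
From mathcomp Require Import all_boot all_order all_algebra.
From mathcomp Require Import reals.
From mathcomp Require Import zify ring lra.
Import Order.TTheory GRing.Theory Num.Theory.
Local Open Scope ring_scope.

Section Aux.
Variable R : realType.
Variable thr : R.
Hypothesis thr_gt0 : 0 < thr.

Lemma le_thr_mul (a : int) : (thr <= a%:~R * thr) = (1 <= a).
Proof. by rewrite -[X in X <= _]mul1r ler_pM2r // -(ler_int R). Qed.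

Lemma mem_eq (k : int) (j : nat) : pasc_mem R thr (k%:~R * thr) j =
  if (j%:Z <= k) then (k - j%:Z)%:~R * thr else (Num.min k 0)%:~R * thr.
Proof.
elim: j => [|j IH].
  rewrite /pasc_mem /=; case: ifP => h; first by rewrite subr0.
  by rewrite min_l //; lia.
rewrite /pasc_mem iterS -/(pasc_mem R thr _ j) IH.
case: (ifP (j%:Z <= k)) => h1; rewrite le_thr_mul.
  case: (ifP (1 <= k - j%:Z)) => h2.
    have -> : (j.+1%:Z <= k) = true by lia.
    have -> : k - j.+1%:Z = (k - j%:Z) - 1 by lia.
    by rewrite !rmorphB /= !mulrBl mul1r.
  have -> : (j.+1%:Z <= k) = false by lia.
  have hk : k = j%:Z by lia.
  rewrite subr0 min_r; last by lia.
  by rewrite hk subrr.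
have -> : (j.+1%:Z <= k) = false by lia.
have -> : (1 <= Num.min k 0) = false by lia.
by rewrite subr0.
Qed.

Lemma ind_eq (k : int) (j : nat) :
  (thr <= pasc_mem R thr (k%:~R * thr) j) = (j%:Z < k).
Proof.
rewrite mem_eq; case: ifP => h; rewrite le_thr_mul; lia.
Qed.

Lemma sum_mem (k : int) (n : nat) :
  \sum_(j < n) (if thr <= pasc_mem R thr (k%:~R * thr) j then thr else 0) =
  (Num.min (Num.max k 0) n%:Z)%:~R * thr.
Proof.
elim: n => [|n IH].
  rewrite big_ord0 min_r ?mul0r //; lia.
rewrite big_ord_recr /= IH ind_eq.
have -> : Num.min (Num.max k 0) n.+1%:Z =
   Num.min (Num.max k 0) n%:Z + (if n%:Z < k then 1 else 0).
  by case: ifP => h; lia.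
rewrite rmorphD mulrDl /=; case: ifP => _; first by rewrite mul1r.
by rewrite mul0r.
Qed.

Lemma stage1 (xs : seq R) : exists k : int,
  let st := foldl (pasc_stage1 R thr) (thr / 2, 0) xs in
  [/\ st.2 = k%:~R * thr, st.1 + st.2 = thr / 2 + \sum_(y <- xs) y,
      0 <= k <= (size xs)%:Z, (st.1 < 0 -> k < (size xs)%:Z) &
      (thr <= st.1 -> 0 < k)].
Proof.
have tp : 0 < thr := thr_gt0.
elim/last_ind: xs => [|xs x [k [h1 h2 h3 h4 h5]]].
  exists 0; rewrite /= big_nil mul0r; split => //= h; exfalso; lra.
cbv zeta; rewrite foldl_rcons size_rcons big_rcons /=.
move: h1 h2 h4 h5.
case: (foldl (pasc_stage1 R thr) (thr / 2, 0) xs) => m s /= h1 h2 h4 h5.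
rewrite /pasc_stage1 /=; case: ifP => H.
  exists (k + 1); rewrite /=; split.
  - by rewrite h1 rmorphD mulrDl mul1r.
  - lra.
  - lia.
  - move=> h; exfalso; lra.
  - lia.
exists k; split => //=.
- lra.
- lia.
- lia.
- by rewrite H.
Qed.

Lemma stage2 (n : nat) (m s : R) (k : int) : s = k%:~R * thr -> exists k' : int,
  let st := iter n (pasc_stage2 R thr) (m, s) in
  [/\ st.2 = k'%:~R * thr, st.1 + st.2 = m + s &
   (0 <= st.1 < thr) \/ (st.1 < 0 /\ m < 0 /\ k' = k - n%:Z) \/
   (thr <= st.1 /\ thr <= m /\ k' = k + n%:Z)].
Proof.
have tp : 0 < thr := thr_gt0.
move=> hs; elim: n => [|n [k' [h1 h2 h3]]].
  exists k; split => //=.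
  case: (ltrP m 0) => h; first by right; left; split => //; split => //; lia.
  case: (ltrP m thr) => h'; first by left; apply/andP.
  by right; right; split => //; split => //; lia.
rewrite iterS; move: h1 h2 h3.
case: (iter n (pasc_stage2 R thr) (m, s)) => m' s' /= h1 h2 h3.
rewrite /pasc_stage2 /=.
case: ifP => H1.
  exists (k' + 1); rewrite /=; split.
  - by rewrite h1 rmorphD mulrDl mul1r.
  - lra.
  - case: h3 => [/andP [a b]|[[a [b c]]|[a [b c]]]]; first (exfalso; lra); first (exfalso; lra).
    case: (ltrP (m' - thr) thr) => h.
      by left; apply/andP; split; lra.
    right; right; split => //; split => //; lia.
case: ifP => H2.
  exists (k' - 1); rewrite /=; split.
  - by rewrite h1 rmorphB mulrBl mul1r.
  - lra.
  - case: h3 => [/andP [a b]|[[a [b c]]|[a [b c]]]]; first (exfalso; lra); last (exfalso; lra).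
    case: (ltrP (m' + thr) 0) => h.
      right; left; split => //; split => //; lia.
    by left; apply/andP; split; lra.
exists k'; split => //.
left; apply/andP; split => /=; first by rewrite leNgt H2.
by rewrite ltNge H1.
Qed.

Lemma stage2' (n : nat) (st0 : R * R) (k : int) : st0.2 = k%:~R * thr ->
  exists k' : int,
  let st := iter n (pasc_stage2 R thr) st0 in
  [/\ st.2 = k'%:~R * thr, st.1 + st.2 = st0.1 + st0.2 &
   (0 <= st.1 < thr) \/ (st.1 < 0 /\ st0.1 < 0 /\ k' = k - n%:Z) \/
   (thr <= st.1 /\ thr <= st0.1 /\ k' = k + n%:Z)].
Proof. by case: st0 => m s; exact: stage2. Qed.

End Aux.

Lemma clip_eq (R : realType) (theta : R) (Ln : nat) (F : int) :
  0 < theta -> (0 < Ln)%N ->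
  theta * clip01 R (F%:~R / Ln%:R) =
  (Num.min (Num.max F 0) Ln%:Z)%:~R * (theta / Ln%:R).
Proof.
move=> th0 Ln0.
have L0 : (0 : R) < Ln%:R by rewrite ltr0n.
rewrite /clip01.
set c := (Num.min (Num.max F 0) _).
case: (lerP F 0) => h1.
  have -> : c = 0 by rewrite /c; lia.
  rewrite mul0r.
  rewrite max_r ?min_l ?mulr0 //.
  by rewrite ler_pdivrMr // mul0r -(ler_int R) in h1 *.
case: (lerP F Ln%:Z) => h2.
  have -> : c = F by rewrite /c; lia.
  rewrite max_l ?min_l; last 2 first.
  - by rewrite ler_pdivrMr // mul1r -(ler_int R F Ln) in h2 *.
  - by rewrite ler_pdivlMr // mul0r ler0z ltW.
  by rewrite mulrCA mulrA.
have -> : c = Ln%:Z by rewrite /c; lia.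
rewrite max_l ?min_r; last 2 first.
- by rewrite ler_pdivlMr // mul1r -[Ln%:R]/((Ln%:Z)%:~R) ler_int ltW.
- by rewrite ler_pdivlMr // mul0r ler0z ltW.
by rewrite mulr1 /= mulrC divfK // gt_eqF.
Qed.


Lemma entry_main (R : realType) (theta : R) (Lp Ln : nat) (x : 'I_Lp -> R) :
  0 < theta -> (0 < Lp)%N -> (0 < Ln)%N ->
  qcfs theta Ln (\sum_(t < Lp) x t) = \sum_(j < Ln) pasc_entry theta Lp Ln x j.
Proof.
move=> th0 Lp0 Ln0.
pose thr := theta / Ln%:R.
have L0 : (0 : R) < Ln%:R by rewrite ltr0n.
have thr0 : 0 < thr by rewrite divr_gt0.
pose xs := [seq x t | t <- enum 'I_Lp].
pose st1 := foldl (pasc_stage1 R thr) (thr/2, 0) xs.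
pose N := (maxn Lp Ln).-1.
pose st2 := iter N (pasc_stage2 R thr) st1.
have E : forall j : nat, pasc_entry theta Lp Ln x j =
   if thr <= pasc_mem R thr st2.2 j then thr else 0 by [].
have [k1 [h11 h12 h13 h14 h15]] := @stage1 R thr thr0 xs.
rewrite -/st1 in h11 h12 h13 h14 h15.
have [k2 [h21 h22 h23]] := @stage2' R thr thr0 N st1 k1 h11.
rewrite -/st2 in h21 h22 h23.
have hS : \sum_(y <- xs) y = \sum_(t < Lp) x t by rewrite big_map big_enum.
have hsz : size xs = Lp by rewrite size_map size_enum_ord.
rewrite hS hsz in h12 h13 h14.
set S := \sum_(t < Lp) x t in h12 *.
under eq_bigr => j _ do rewrite E.
rewrite h21 sum_mem //.
rewrite /qcfs clip_eq // -/thr.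
congr (_%:~R * _).
set y := S * Ln%:R / theta + 2^-1.
have hf : S * Ln%:R / theta * thr = S.
  by rewrite /thr; field; rewrite (lt0r_neq0 L0) (lt0r_neq0 th0).
have key : y * thr = k2%:~R * thr + st2.1.
  rewrite /y mulrDl hf; lra.
have hk1 : forall a : int, (a + 1)%:~R * thr = a%:~R * thr + thr.
  by move=> a; rewrite rmorphD mulrDl mul1r.
have hNL : (Lp <= N.+1)%N /\ (Ln <= N.+1)%N.
  rewrite /N prednK; last by rewrite leq_max Lp0.
  by rewrite leq_maxl leq_maxr.
case: h23 => [/andP [a b]|[[a [b c]]|[a [b c]]]].
- have -> : Num.floor y = k2; last by [].
  apply: floor_def; apply/andP; split.
    by rewrite -(ler_pM2r thr0) key; lra.
  by rewrite -(ltr_pM2r thr0) key hk1; lra.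
- have hF : Num.floor y < k2.
    rewrite -(ltr_int R); apply: le_lt_trans (floor_le y) _.
    by rewrite -(ltr_pM2r thr0) key; lra.
  have := h14 b; lia.
- have hF : k2 <= Num.floor y.
    rewrite floor_ge_int -(ler_pM2r thr0) key; lra.
  have := h15 b; lia.
Qed.

Theorem theorem2 (R : realType) (I : Type) (theta : R) (Lp Ln : nat)
    (z : I -> R) (X : 'I_Lp -> I -> R) :
  0 < theta -> (0 < Lp)%N -> (0 < Ln)%N ->
  (forall i : I, \sum_(t < Lp) X t i = z i) ->
  (forall i : I, qcfs theta Ln (z i) = \sum_(j < Ln) pasc theta Lp Ln X j i) /\
  (forall (j : 'I_Ln) (i : I),
      pasc theta Lp Ln X j i = 0 \/ pasc theta Lp Ln X j i = theta / Ln%:R).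
Proof.
move=> th0 Lp0 Ln0 hz; split.
  move=> i; rewrite -hz (@entry_main R theta Lp Ln (fun t => X t i)) //.
move=> j i; rewrite /pasc /pasc_entry /=.
by case: ifP => _; [right | left].
Qed.
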